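(* Let the setting of the context hold, fix $x\in\mathcal{X}$, and assume $|g_t(z)|\le G$ for all $z$ and $t\in\{0,1\}$. Define $\epsilon_F(x):=\sum_t p(t\mid x)\,\epsilon_{F,t}(x)$ and $\epsilon_{CF}(x):=\sum_t p(1-t\mid x)\,\epsilon_{CF,t}(x)$. Then $$\epsilon_f(x)\le 2\big(G^2(\epsilon_F(x)+\epsilon_{CF}(x))-\mathbb{V}_Y(x)\big),$$ where $\mathbb{V}_Y(x):=\mathbb{E}_{q(z\mid x)}\sum_t\mathbb{E}_{p_{Y(t)\mid\mathbb{P}_t}(y\mid z)}(y-j_t(z))^2$.
   Context: Binary treatment $T\in\{0,1\}$, covariates $X\in\mathcal{X}$, real-valued potential outcomes $Y(t)$, observed $Y=Y(T)$, observational distribution $p(x,y,t)$, exchangeability $Y(t)\perp T\mid X$. Data generating assumption: $Y=f^*(\mathbb{M}(X),T)+e$ with $e$ zero-mean exogenous noise, and $\mathbb{E}(Y(t)\mid X)=j_t(\mathbb{P}_t(X))$ for functions $\mathbb{P}_t$ and injective $j_t$, where $Y(t)\perp X\mid\mathbb{P}_t(X)$; $p_{Y(t)\mid\mathbb{P}_t}(y\mid P)$ denotes the conditional density of $Y(t)$ given $\mathbb{P}_t(X)=P$. Let $f_t,g_t$ be functions of $z$ and $q_\phi(z\mid x,y,t)$ a conditional density; $q_t(z\mid x):=\mathbb{E}_{p(y\mid x,t)}q_\phi(z\mid x,y,t)$, $q(z\mid x):=\mathbb{E}_{p(y,t\mid x)}q_\phi(z\mid x,y,t)$. Define $\mathcal{L}_f(z,t):=g_t(z)^{-2}\int(y-f_t(z))^2p_{Y(t)\mid\mathbb{P}_t}(y\mid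 z)\,dy$, $\epsilon_{F,t}(x):=\mathbb{E}_{q_t(z\mid x)}\mathcal{L}_f(z,t)$, $\epsilon_{CF,t}(x):=\mathbb{E}_{q_{1-t}(z\mid x)}\mathcal{L}_f(z,t)$, and $\epsilon_f(x):=\mathbb{E}_{q(z\mid x)}\big((f_1(z)-f_0(z))-(j_1(z)-j_0(z))\big)^2$. *)

(* Defs.v *)
From HB Require Import structures.
From mathcomp Require Import all_boot all_order all_algebra.
From mathcomp Require Import all_classical all_reals all_analysis.
Set Implicit Arguments. Unset Strict Implicit. Unset Printing Implicit Defensive.
Import Order.TTheory GRing.Theory Num.Theory.
Local Open Scope ring_scope.
Local Open Scope ereal_scope.

(* Conventions: the binary treatment t is a bool (true = 1, false = 0, 1-t = ~~ t).
   Outcomes y live in R with Lebesgue measure; the latent z lives in a measurable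
   space Z with a reference measure [mu] w.r.t. which q_phi(z|x,y,t) is a density.
   - pT x t          = p(t | x)
   - pY x t y        = p(y | x, t)            (density in y)
   - qphi x y t z    = q_phi(z | x, y, t)     (density in z w.r.t. mu)
   - pYP t z y       = p_{Y(t)|P_t}(y | z)    (density in y)
   - f t z, g t z, j t z = f_t(z), g_t(z), j_t(z). *)

Section Defs.
Context {R : realType} {X : Type} {d : measure_display} {Z : measurableType d}.
Variable mu : {measure set Z -> \bar R}.

Notation leb := (@lebesgue_measure R).

Definition q_t (pY : X -> bool -> R -> R) (qphi : X -> R -> bool -> Z -> R)
    (x : X) (t : bool) (z : Z) : \bar R :=
  \int[leb]_y (pY x t y * qphi x y t z)%:E.

(* q(z|x) := E_{p(y,t|x)} q_phi(z|x,y,t), with p(y,t|x) = p(t|x) p(y|x,t) *)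
Definition q_mix (pT : X -> bool -> R) (pY : X -> bool -> R -> R)
    (qphi : X -> R -> bool -> Z -> R) (x : X) (z : Z) : \bar R :=
  \sum_(t : bool) ((pT x t)%:E * q_t pY qphi x t z).

Definition L_f (f g : bool -> Z -> R) (pYP : bool -> Z -> R -> R)
    (z : Z) (t : bool) : \bar R :=
  ((g t z) ^- 2)%:E * \int[leb]_y (((y - f t z) ^+ 2) * pYP t z y)%:E.

Definition eps_F_t pY qphi f g pYP (x : X) (t : bool) : \bar R :=
  \int[mu]_z (q_t pY qphi x t z * L_f f g pYP z t).

Definition eps_CF_t pY qphi f g pYP (x : X) (t : bool) : \bar R :=
  \int[mu]_z (q_t pY qphi x (~~ t) z * L_f f g pYP z t).

Definition eps_f pT pY qphi (f j : bool -> Z -> R) (x : X) : \bar R :=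
  \int[mu]_z (q_mix pT pY qphi x z *
     (((f true z - f false z) - (j true z - j false z)) ^+ 2)%:E).

Definition eps_F pT pY qphi f g pYP (x : X) : \bar R :=
  \sum_(t : bool) ((pT x t)%:E * eps_F_t pY qphi f g pYP x t).

Definition eps_CF pT pY qphi f g pYP (x : X) : \bar R :=
  \sum_(t : bool) ((pT x (~~ t))%:E * eps_CF_t pY qphi f g pYP x t).

Definition V_Y pT pY qphi (j : bool -> Z -> R) (pYP : bool -> Z -> R -> R)
    (x : X) : \bar R :=
  \int[mu]_z (q_mix pT pY qphi x z *
     \sum_(t : bool) \int[leb]_y (((y - j t z) ^+ 2) * pYP t z y)%:E).

End Defs.

(* Main.v *)
Require Import Defs.
From HB Require Import structures.
From mathcomp Require Import all_boot all_order all_algebra.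
From mathcomp Require Import all_classical all_reals all_analysis measurable_realfun.
From mathcomp Require Import ring lra.
Import Order.TTheory GRing.Theory Num.Theory.
Local Open Scope ring_scope.
Local Open Scope ereal_scope.

Lemma moment_lemma (R : realType) (p : R -> R) (m c : R) :
  (forall y, (0 <= p y)%R) -> measurable_fun setT p ->
  \int[@lebesgue_measure R]_y (p y)%:E = 1 ->
  (@lebesgue_measure R).-integrable setT (fun y => (y * p y)%:E) ->
  (@lebesgue_measure R).-integrable setT (fun y => (y ^+ 2 * p y)%:E) ->
  \int[@lebesgue_measure R]_y (y * p y)%:E = m%:E ->
  \int[@lebesgue_measure R]_y (((y - c) ^+ 2) * p y)%:E =
  (fine (\int[@lebesgue_measure R]_y (y ^+ 2 * p y)%:E) - 2 * c * m + c ^+ 2)%:E.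
Proof.
move=> p0 mp ip iy iy2 im.
have ipp : (@lebesgue_measure R).-integrable setT (fun y => (p y)%:E).
  apply/integrableP; split; first exact/measurable_EFinP.
  under eq_integral do rewrite gee0_abs ?lee_fin//.
  by rewrite ip ltry.
have fin2 := integrable_fin_num measurableT iy2.
have -> : \int[@lebesgue_measure R]_y (((y - c) ^+ 2) * p y)%:E =
  \int[@lebesgue_measure R]_y ((y ^+ 2 * p y)%:E + 
    ((- (2 * c))%:E * (y * p y)%:E + (c ^+ 2)%:E * (p y)%:E)).
  by apply: eq_integral => y _; rewrite -!EFinM -!EFinD; congr EFin; ring.
rewrite integralD //; last first.
  apply: integrableD => //; exact: integrableZl.
rewrite integralD //; try exact: integrableZl.
rewrite integralZl // integralZl // im ip -{1}(fineK fin2).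
by rewrite mule1 -EFinM -!EFinD; congr EFin; ring.
Qed.
Local Close Scope ereal_scope.

Lemma real_ineq (R : realType) (G g1 g0 V1 V0 e1 e0 : R) :
  g1 != 0 -> g0 != 0 -> `|g1| <= G -> `|g0| <= G -> 0 <= V1 -> 0 <= V0 ->
  (e1 - e0) ^+ 2 + 2 * (V1 + V0) <=
  2 * (G ^+ 2 * (g1 ^- 2 * (V1 + e1 ^+ 2) + g0 ^- 2 * (V0 + e0 ^+ 2))).
Proof.
move=> g10 g00 G1 G0 V10 V00.
have key (g : R) : g != 0 -> `|g| <= G -> 1 <= G ^+ 2 * g ^- 2.
  move=> gn0 gG.
  have g2 : 0 < g ^+ 2 by rewrite lt_def sqrf_eq0 gn0 sqr_ge0.
  have h : G ^+ 2 * g ^- 2 - 1 = (G ^+ 2 - g ^+ 2) / g ^+ 2.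
    by field; rewrite ?expf_neq0 ?gn0.
  have : 0 <= (G ^+ 2 - g ^+ 2) / g ^+ 2.
    apply: divr_ge0; last exact: ltW.
    move: gG; rewrite ler_norml => /andP[h1 h2]; rewrite subr_ge0; nra.
  by rewrite -h subr_ge0.
have k1 := key _ g10 G1; have k0 := key _ g00 G0.
set a1 := G ^+ 2 * g1 ^- 2 in k1 *; set a0 := G ^+ 2 * g0 ^- 2 in k0 *.
have h1 : V1 + e1 ^+ 2 <= a1 * (V1 + e1 ^+ 2).
  have hh : 0 <= (a1 - 1) * (V1 + e1 ^+ 2).
    by apply: mulr_ge0; [rewrite subr_ge0 | rewrite addr_ge0 // sqr_ge0].
  lra.
have h0 : V0 + e0 ^+ 2 <= a0 * (V0 + e0 ^+ 2).
  have hh : 0 <= (a0 - 1) * (V0 + e0 ^+ 2).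
    by apply: mulr_ge0; [rewrite subr_ge0 | rewrite addr_ge0 // sqr_ge0].
  lra.

have : (e1 - e0) ^+ 2 <= 2 * (e1 ^+ 2 + e0 ^+ 2).
  have := sqr_ge0 (e1 + e0); nra.
move=> H.
have -> : 2 * (G ^+ 2 * (g1 ^- 2 * (V1 + e1 ^+ 2) + g0 ^- 2 * (V0 + e0 ^+ 2))) =
  2 * (a1 * (V1 + e1 ^+ 2) + a0 * (V0 + e0 ^+ 2)) by rewrite /a1 /a0; ring.
lra.
Qed.

Lemma inv2_meas (R : realType) d (Z : measurableType d) (g : Z -> R) :
  measurable_fun setT g -> (forall z, g z != 0) ->
  measurable_fun setT (fun z => g z ^- 2).
Proof.
move=> mg g0.
have -> : (fun z => g z ^- 2) = (fun z => expR (- ln (g z ^+ 2))).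
  apply: funext => z; rewrite expRN lnK //.
  by rewrite posrE lt_def sqrf_eq0 g0 sqr_ge0.
apply: measurableT_comp; first exact: measurable_expR.
apply: measurableT_comp; first exact: measurable_funN.
apply: measurableT_comp; first exact: measurable_ln.
exact: measurable_funX.
Qed.

Local Open Scope ereal_scope.

Lemma tonelli_meas (R : realType) d (Z : measurableType d) (h : Z * R -> R) :
  measurable_fun setT h -> (forall zy, (0 <= h zy)%R) ->
  measurable_fun setT (fun z => \int[@lebesgue_measure R]_y (h (z, y))%:E).
Proof.
move=> mh h0.
have := (@measurable_fun_fubini_tonelli_F _ _ Z _ R (@lebesgue_measure R) (EFin \o h)
  (measurableT_comp (@EFin_measurable R setT) mh) (fun zy => h0 zy : (0 <= (h zy)%:E))).
by [].
Qed.


Lemma ACswap (R : realDomainType) (a b c e : \bar R) : (a + b)%R + (c + e)%R = a + c + (e + b).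
Proof. exact: (etrans (addeACA a b c e) (congr1 (adde (a + c)) (addeC b e))). Qed.

Theorem lemma3 (R : realType) (X : Type) (d : measure_display) (Z : measurableType d)
  (mu : {measure set Z -> \bar R})
  (pT : X -> bool -> R) (pY : X -> bool -> R -> R)
  (qphi : X -> R -> bool -> Z -> R) (pYP : bool -> Z -> R -> R)
  (f g j : bool -> Z -> R) (G : R) (x : X) :
  sigma_finite setT mu ->
  (forall t, (0 <= pT x t)%R) -> (pT x true + pT x false = 1)%R ->
  (forall t y, (0 <= pY x t y)%R) ->
  (forall t, measurable_fun setT (pY x t)) ->
  (forall t, \int[@lebesgue_measure R]_y (pY x t y)%:E = 1) ->
  (forall y t z, (0 <= qphi x y t z)%R) ->
  (forall t, measurable_fun setT (fun yz : R * Z => qphi x yz.1 t yz.2)) ->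
  (forall y t, \int[mu]_z (qphi x y t z)%:E = 1) ->
  (forall t z y, (0 <= pYP t z y)%R) ->
  (forall t, measurable_fun setT (fun zy : Z * R => pYP t zy.1 zy.2)) ->
  (forall t z, \int[@lebesgue_measure R]_y (pYP t z y)%:E = 1) ->
  (forall t z, (@lebesgue_measure R).-integrable setT
                 (fun y => (y * pYP t z y)%:E)) ->
  (forall t z, (@lebesgue_measure R).-integrable setT
                 (fun y => (y ^+ 2 * pYP t z y)%:E)) ->
  (forall t z, \int[@lebesgue_measure R]_y (y * pYP t z y)%:E = (j t z)%:E) ->
  (forall t, measurable_fun setT (f t)) ->
  (forall t, measurable_fun setT (g t)) ->
  (forall t, measurable_fun setT (j t)) ->
  (forall t z, g t z != 0%R) ->
  (forall t z, (`|g t z| <= G)%R) ->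
  V_Y mu pT pY qphi j pYP x < +oo ->
  eps_f mu pT pY qphi f j x <=
    2%:E * ((G ^+ 2)%:E * (eps_F mu pT pY qphi f g pYP x + eps_CF mu pT pY qphi f g pYP x)
            - V_Y mu pT pY qphi j pYP x).
Proof.
move=> _ pT0 pT1 pY0 mpY ipY q0 mq iq pYP0 mpYP ipYP iy iy2 ij mf mg mj g0 gG VYfin.
have mp t z : measurable_fun setT (pYP t z).
  exact: (measurable_fun_pair2 (f := fun zy : Z * R => pYP t zy.1 zy.2) z (mpYP t)).
have mom t z c : \int[@lebesgue_measure R]_y (((y - c) ^+ 2) * pYP t z y)%:E =
   (fine (\int[@lebesgue_measure R]_y (y ^+ 2 * pYP t z y)%:E) - 2 * c * j t z + c ^+ 2)%:E.
  exact: moment_lemma.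
pose V t z := fine (\int[@lebesgue_measure R]_y (((y - j t z) ^+ 2) * pYP t z y)%:E).
have Vdef t z : \int[@lebesgue_measure R]_y (((y - j t z) ^+ 2) * pYP t z y)%:E = (V t z)%:E.
  by rewrite /V mom.
have V0 t z : (0 <= V t z)%R.
  rewrite -lee_fin -Vdef; apply: integral_ge0 => y _.
  by rewrite lee_fin mulr_ge0 // sqr_ge0.
have Ldef t z : L_f f g pYP z t = (g t z ^- 2 * (V t z + (f t z - j t z) ^+ 2))%:E.
  by rewrite /L_f mom /V mom /= -EFinM; congr EFin; ring.
have L0 t z : 0 <= L_f f g pYP z t.
  rewrite Ldef lee_fin mulr_ge0 //; last by rewrite addr_ge0 // sqr_ge0.
  by rewrite invr_ge0 sqr_ge0.
have Wdef z : \sum_(t : bool) \int[@lebesgue_measure R]_y (((y - j t z) ^+ 2) * pYP t z y)%:E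
    = (V true z + V false z)%:E.
  by rewrite big_bool /= !Vdef.
have qt0 t z : 0 <= q_t pY qphi x t z.
  by apply: integral_ge0 => y _; rewrite lee_fin mulr_ge0.
have Qdef z : q_mix pT pY qphi x z =
    (pT x true)%:E * q_t pY qphi x true z + (pT x false)%:E * q_t pY qphi x false z.
  by rewrite /q_mix big_bool.
have Q0 z : 0 <= q_mix pT pY qphi x z.
  by rewrite Qdef adde_ge0 // mule_ge0 // lee_fin.
have mqt t : measurable_fun setT (q_t pY qphi x t).
  have H := @tonelli_meas R d Z (fun zy : Z * R => (pY x t zy.2 * qphi x zy.2 t zy.1)%R).
  simpl in H; rewrite /q_t; apply: H.
    apply: measurable_funM.
      exact: (measurableT_comp (mpY t) (@measurable_snd _ _ Z R)).
    exact: (measurableT_comp (mq t) (measurable_fun_pair (@measurable_snd _ _ Z R) (@measurable_fst _ _ Z R))).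
  by move=> zy; rewrite mulr_ge0.
have mQ : measurable_fun setT (q_mix pT pY qphi x).
  rewrite (_ : q_mix pT pY qphi x = fun z => (pT x true)%:E * q_t pY qphi x true z
     + (pT x false)%:E * q_t pY qphi x false z); last by apply: funext => z; rewrite Qdef.
  by apply: emeasurable_funD; apply: measurable_funeM.
have mL t : measurable_fun setT (fun z => L_f f g pYP z t).
  apply: emeasurable_funM.
    apply/measurable_EFinP; exact: inv2_meas.
  have H := @tonelli_meas R d Z (fun zy : Z * R => ((zy.2 - f t zy.1) ^+ 2 * pYP t zy.1 zy.2)%R).
  simpl in H; apply: H.
    apply: measurable_funM; last exact: mpYP.
    apply: measurable_funX; apply: measurable_funB; first exact: measurable_snd.
    exact: measurableT_comp (mf t) measurable_fst.
  by move=> zy; rewrite mulr_ge0 // sqr_ge0.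
have mW : measurable_fun setT (fun z => \sum_(t : bool)
     \int[@lebesgue_measure R]_y (((y - j t z) ^+ 2) * pYP t z y)%:E).
  rewrite (_ : (fun z => _) = fun z => 
     \int[@lebesgue_measure R]_y (((y - j true z) ^+ 2) * pYP true z y)%:E +
     \int[@lebesgue_measure R]_y (((y - j false z) ^+ 2) * pYP false z y)%:E);
    last by apply: funext => z; rewrite big_bool.
  apply: emeasurable_funD.
    have H := @tonelli_meas R d Z (fun zy : Z * R => ((zy.2 - j true zy.1) ^+ 2 * pYP true zy.1 zy.2)%R).
    simpl in H; apply: H.
      apply: measurable_funM; last exact: mpYP.
      apply: measurable_funX; apply: measurable_funB; first exact: measurable_snd.
      exact: measurableT_comp (mj true) measurable_fst.
    by move=> zy; rewrite mulr_ge0 // sqr_ge0.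
  have H := @tonelli_meas R d Z (fun zy : Z * R => ((zy.2 - j false zy.1) ^+ 2 * pYP false zy.1 zy.2)%R).
  simpl in H; apply: H.
    apply: measurable_funM; last exact: mpYP.
    apply: measurable_funX; apply: measurable_funB; first exact: measurable_snd.
    exact: measurableT_comp (mj false) measurable_fst.
  by move=> zy; rewrite mulr_ge0 // sqr_ge0.
have mQL t : measurable_fun setT (fun z => q_mix pT pY qphi x z * L_f f g pYP z t).
  exact: emeasurable_funM.
have mqL s t : measurable_fun setT (fun z => q_t pY qphi x s z * L_f f g pYP z t).
  exact: emeasurable_funM.
have mQW : measurable_fun setT (fun z => q_mix pT pY qphi x z * \sum_(t : bool)
     \int[@lebesgue_measure R]_y (((y - j t z) ^+ 2) * pYP t z y)%:E).
  exact: emeasurable_funM.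
have mD : measurable_fun setT (fun z => ((((f true z - f false z) - (j true z - j false z)) ^+ 2)%:E)).
  apply/measurable_EFinP; apply: measurable_funX.
  by apply: measurable_funB; apply: measurable_funB; first [exact: mf | exact: mj].
have mQD := emeasurable_funM mQ mD.
have split t : \int[mu]_z (q_mix pT pY qphi x z * L_f f g pYP z t) =
   (pT x true)%:E * \int[mu]_z (q_t pY qphi x true z * L_f f g pYP z t) +
   (pT x false)%:E * \int[mu]_z (q_t pY qphi x false z * L_f f g pYP z t).
  transitivity (\int[mu]_z ((pT x true)%:E * (q_t pY qphi x true z * L_f f g pYP z t) +
     (pT x false)%:E * (q_t pY qphi x false z * L_f f g pYP z t))).
    apply: eq_integral => z _.
    by rewrite Qdef ge0_muleDl ?mule_ge0 ?lee_fin // !muleA.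
  rewrite ge0_integralD //.
  all: try (move=> z _; apply: mule_ge0; [by rewrite lee_fin | exact: mule_ge0 (qt0 _ _) (L0 _ _)]).
  all: try exact: measurable_funeM.
  rewrite !ge0_integralZl_EFin //.
  all: try (move=> z _; exact: mule_ge0 (qt0 _ _) (L0 _ _)).
have E1 : eps_f mu pT pY qphi f j x = \int[mu]_z (q_mix pT pY qphi x z *
    ((((f true z - f false z) - (j true z - j false z)) ^+ 2)%:E)) by [].
have E3 : eps_F mu pT pY qphi f g pYP x + eps_CF mu pT pY qphi f g pYP x =
    \int[mu]_z (q_mix pT pY qphi x z * L_f f g pYP z true) +
    \int[mu]_z (q_mix pT pY qphi x z * L_f f g pYP z false).
  rewrite /eps_F /eps_CF !big_bool /eps_F_t /eps_CF_t /= !split.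
  exact: ACswap.
set VV := V_Y mu pT pY qphi j pYP x.
have VV0 : 0 <= VV.
  apply: integral_ge0 => z _; apply: mule_ge0 => //.
  by rewrite Wdef lee_fin addr_ge0.
have VVf : VV \is a fin_num by rewrite ge0_fin_numE.
rewrite E3 E1 muleBr //; last by apply: fin_num_adde_defl; rewrite fin_numN.
rewrite leeBrDr; last by rewrite fin_numM.
have QW0 z : 0 <= q_mix pT pY qphi x z * \sum_(t : bool)
     \int[@lebesgue_measure R]_y (((y - j t z) ^+ 2) * pYP t z y)%:E.
  by apply: mule_ge0 => //; rewrite Wdef lee_fin addr_ge0.
have QD0 z : 0 <= q_mix pT pY qphi x z *
    ((((f true z - f false z) - (j true z - j false z)) ^+ 2)%:E).
  by apply: mule_ge0 => //; rewrite lee_fin sqr_ge0.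
have QL0 t z : 0 <= q_mix pT pY qphi x z * L_f f g pYP z t.
  exact: mule_ge0.
have LHSe : \int[mu]_z (q_mix pT pY qphi x z *
    ((((f true z - f false z) - (j true z - j false z)) ^+ 2)%:E)) + 2%:E * VV =
  \int[mu]_z (q_mix pT pY qphi x z *
    ((((f true z - f false z) - (j true z - j false z)) ^+ 2)%:E) +
    2%:E * (q_mix pT pY qphi x z * \sum_(t : bool)
     \int[@lebesgue_measure R]_y (((y - j t z) ^+ 2) * pYP t z y)%:E)).
  rewrite ge0_integralD //.
  - by rewrite ge0_integralZl_EFin.
  - by move=> z _; rewrite mule_ge0.
  - exact: measurable_funeM.
have G20 : (0 <= 2 * G ^+ 2)%R by rewrite mulr_ge0 // sqr_ge0.
have RHSe : 2%:E * ((G ^+ 2)%:E * (\int[mu]_z (q_mix pT pY qphi x z * L_f f g pYP z true) +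
    \int[mu]_z (q_mix pT pY qphi x z * L_f f g pYP z false))) =
  \int[mu]_z ((2 * G ^+ 2)%:E * (q_mix pT pY qphi x z * L_f f g pYP z true +
    q_mix pT pY qphi x z * L_f f g pYP z false)).
  rewrite ge0_integralZl_EFin //.
  - by rewrite ge0_integralD // muleA -EFinM.
  - by move=> z _; rewrite adde_ge0.
  - exact: emeasurable_funD.
rewrite LHSe RHSe.
apply: ge0_le_integral => //.
- by move=> z _; rewrite adde_ge0 // mule_ge0.
- apply: emeasurable_funD => //; exact: measurable_funeM.
- by apply: measurable_funeM; exact: emeasurable_funD.
move=> z _.
rewrite -(ge0_muleDr (q_mix pT pY qphi x z) (L0 true z) (L0 false z)) (muleCA (2 * G ^+ 2)%:E).
rewrite Wdef (muleCA 2%:E) -ge0_muleDr; first last.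
- by rewrite -EFinM lee_fin mulr_ge0 // addr_ge0.
- by rewrite lee_fin sqr_ge0.
apply: lee_wpmul2l => //.
rewrite !Ldef -EFinM -!EFinD -EFinM lee_fin.
have := real_ineq R G (g true z) (g false z) (V true z) (V false z)
  (f true z - j true z) (f false z - j false z) (g0 true z) (g0 false z)
  (gG true z) (gG false z) (V0 true z) (V0 false z).
move=> H; lra.
Qed.
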